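(* Let $N \ge 2$ and let $\alpha = (\alpha_1,\dots,\alpha_N) : \mathbb{R}^{3N} \to \mathbb{R}^N$ be a $C^\infty$ map. Then the sortlet $\Psi_\alpha : \mathbb{R}^{3N} \to \mathbb{R}$ (defined in the context) is continuously once-differentiable on $\mathbb{R}^{3N}$, i.e. all first partial derivatives $\partial \Psi_\alpha / \partial r^i$ exist and are continuous on $\mathbb{R}^{3N}$.
   Context: Write points of $\mathbb{R}^{3N}$ as $r = (r_1,\dots,r_N)$ with $r_i \in \mathbb{R}^3$. Sortlet: at a configuration $r$ where the values $\alpha_1(r),\dots,\alpha_N(r)$ are pairwise distinct, let $\pi_\alpha$ be the unique permutation of $\{1,\dots,N\}$ with $\alpha_{\pi_\alpha(1)}(r) < \dots < \alpha_{\pi_\alpha(N)}(r)$ (the permutation sorting $\alpha(r)$), and set $$\Psi_\alpha(r) = \sigma(\pi_\alpha) \prod_{i=1}^{N-1} \big(\alpha_{\pi_\alpha(i+1)}(r) - \alpha_{\pi_\alpha(i)}(r)\big),$$ where $\sigma(\pi) \in \{+1,-1\}$ is the sign (parity) of $\pi$. At configurations where two of the values $\alpha_i(r)$ coincide, the product of consecutive sorted differences vanishes and $\Psi_\alpha(r) = 0$. *)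

(* Defs.v *)
From HB Require Import structures.
From mathcomp Require Import all_boot all_order all_algebra all_fingroup.
From mathcomp Require Import all_classical all_reals all_analysis.
Set Implicit Arguments. Unset Strict Implicit. Unset Printing Implicit Defensive.
Import Order.TTheory GRing.Theory Num.Theory.
Import numFieldNormedType.Exports.
Local Open Scope ring_scope.

Definition basis_vec (R : realType) (d : nat) (j : 'I_d) : 'rV[R]_d :=
  delta_mx 0 j.

(* Iterated partial derivatives along the coordinate directions listed in js
   (innermost derivative = last element of the list). *)
Fixpoint iter_partial (R : realType) (d : nat) (js : seq 'I_d)
  (f : 'rV[R]_d -> R) : 'rV[R]_d -> R :=
  match js with
  | [::] => f
  | j :: js' => fun x => derive (iter_partial js' f) x (basis_vec R j)
  end.

Definition smooth (R : realType) (d : nat) (f : 'rV[R]_d -> R) : Prop :=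
  forall js : seq 'I_d,
    continuous (iter_partial js f) /\
    forall (j : 'I_d) (x : 'rV[R]_d),
      derivable (iter_partial js f) x (basis_vec R j).

(* Value at a natural index (0 outside range). *)
Definition at_nat (R : realType) (N : nat) (v : 'I_N -> R) (n : nat) : R :=
  match insub n with Some i => v i | None => 0 end.

(* At r, if some permutation pi sorts
   alpha(r) strictly increasingly (i.e. the values are pairwise distinct),
   Psi = sign(pi) * prod_{i=1}^{N-1} (alpha_{pi(i+1)} - alpha_{pi(i)});
   otherwise (two values coincide) Psi = 0. *)
Definition sortlet (R : realType) (N : nat)
  (alpha : 'rV[R]_(3 * N) -> 'I_N -> R) (r : 'rV[R]_(3 * N)) : R :=
  match [pick s : 'S_N | [forall i : 'I_N, forall j : 'I_N,
            (i < j)%N ==> (alpha r (s i) < alpha r (s j))]] with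
  | Some s =>
      (-1) ^+ (odd_perm s) *
      \prod_(i < N.-1)
        (at_nat (fun k => alpha r (s k)) i.+1 - at_nat (fun k => alpha r (s k)) i)
  | None => 0
  end.

(* Main.v *)
Require Import Defs.
From HB Require Import structures.
From mathcomp Require Import all_boot all_order all_algebra all_fingroup.
From mathcomp Require Import all_classical all_reals all_analysis.
From mathcomp Require Import zify lra.
Import Order.TTheory GRing.Theory Num.Theory.
Import numFieldNormedType.Exports.
Set Implicit Arguments. Unset Strict Implicit. Unset Printing Implicit Defensive.
Local Open Scope ring_scope.

Section Comb.
Variables (R : realType) (N : nat).
Implicit Types (a : 'I_N -> R) (s t : 'S_N).

Definition wsort a s := forall i j : 'I_N, (i <= j)%N -> a (s i) <= a (s j).

Lemma map_perm_enum s : perm_eq (map s (enum 'I_N)) (enum 'I_N).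
Proof.
apply: uniq_perm; first by rewrite (map_inj_uniq (@perm_inj _ s)) enum_uniq.
  exact: enum_uniq.
move=> x; rewrite mem_enum; apply/mapP; exists (s^-1 x)%g; first by rewrite mem_enum.
by rewrite permKV.
Qed.

Lemma wsort_sorted a s : wsort a s -> sorted <=%R (map (a \o s) (enum 'I_N)).
Proof.
move=> ws; apply: pairwise_sorted.
rewrite pairwise_map.
have: pairwise (fun i j : 'I_N => (i <= j)%N) (enum 'I_N).
  have := pairwise_map val (fun i j => (i <= j)%N) (enum 'I_N).
  rewrite val_enum_ord => <-.
  rewrite -sorted_pairwise; last exact: leq_trans.
  exact: iota_sorted.
by apply: sub_pairwise => i j /ws.
Qed.

Lemma wsort_eq a s t : wsort a s -> wsort a t -> forall i, a (s i) = a (t i).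
Proof.
move=> ws wt.
have tr : transitive (<=%R : rel R) by move=> ? ? ?; apply: le_trans.
have an : antisymmetric (<=%R : rel R) by move=> ? ?; apply: le_anti.
have E: map (a \o s) (enum 'I_N) = map (a \o t) (enum 'I_N).
  apply: (sorted_eq tr an (wsort_sorted ws) (wsort_sorted wt)).
  rewrite (map_comp a s) (map_comp a t).
  apply: (perm_trans (perm_map a (map_perm_enum s))).
  rewrite perm_sym; exact: (perm_map a (map_perm_enum t)).
move=> i; have := congr1 (fun l => nth 0 l i) E.
have hi : (i < size (enum 'I_N))%N by rewrite size_enum_ord.
rewrite (nth_map i _ _ hi) (nth_map i _ _ hi) /=.
by rewrite nth_ord_enum.
Qed.

Lemma wsort_exists a : exists s, wsort a s.
Proof.
pose leT := fun i j : 'I_N => a i <= a j.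
pose l := sort leT (enum 'I_N).
have sz : size l = N by rewrite size_sort size_enum_ord.
have ul : uniq l by rewrite sort_uniq enum_uniq.
have sl : sorted leT l by apply: sort_sorted => i j; exact: le_total.
pose f := fun i : 'I_N => nth i l i.
have fE : forall i j : 'I_N, f i = nth j l i.
  by move=> i j; apply: set_nth_default; rewrite sz.
have finj : injective f.
  move=> i j; rewrite (fE i j) /f => /eqP; rewrite nth_uniq ?sz //.
  by move/eqP/val_inj.
exists (perm finj) => i j ij; rewrite !permE (fE i j).
apply: (sorted_leq_nth (leT:=leT)) => //.
- by move=> x y z; exact: le_trans.
- by move=> x; exact: lexx.
- by rewrite inE sz.
- by rewrite inE sz.
Qed.

End Comb.

Section Comb2.
Variables (R : realType) (N : nat).
Implicit Types (a : 'I_N -> R) (s t : 'S_N).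

Definition gap a s (k : nat) : R :=
  at_nat (fun m => a (s m)) k.+1 - at_nat (fun m => a (s m)) k.

Definition Pv a s : R := (-1) ^+ (odd_perm s) * \prod_(i < N.-1) gap a s i.

Lemma at_natE (v : 'I_N -> R) (k : nat) (hk : (k < N)%N) : at_nat v k = v (Ordinal hk).
Proof.
rewrite /at_nat insubT /=; congr v; exact: val_inj.
Qed.

Lemma lo_proof (k : 'I_N.-1) : (k < N)%N.
Proof. have := ltn_ord k; lia. Qed.
Lemma hi_proof (k : 'I_N.-1) : (k.+1 < N)%N.
Proof. have := ltn_ord k; lia. Qed.
Definition lo (k : 'I_N.-1) : 'I_N := Ordinal (lo_proof k).
Definition hi (k : 'I_N.-1) : 'I_N := Ordinal (hi_proof k).

Lemma gapE a s (k : 'I_N.-1) : gap a s k = a (s (hi k)) - a (s (lo k)).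
Proof. by rewrite /gap (at_natE _ (hi_proof k)) (at_natE _ (lo_proof k)). Qed.

Lemma sandwich a s (i l j : 'I_N) : wsort a s -> (i <= l)%N -> (l <= j)%N ->
  a (s i) = a (s j) -> a (s l) = a (s i).
Proof.
move=> ws il lj e; apply/le_anti/andP; split; [rewrite e; exact: ws | exact: ws].
Qed.

Lemma zero_gap a s (i j : 'I_N) : wsort a s -> (i < j)%N -> a (s i) = a (s j) ->
  exists k : 'I_N.-1, val k = val i /\ gap a s k = 0.
Proof.
move=> ws ij e.
have hk : (i < N.-1)%N by have := ltn_ord j; lia.
exists (Ordinal hk); split => //.
rewrite (gapE a s (Ordinal hk)).
have -> : lo (Ordinal hk) = i by apply: val_inj.
have -> : a (s (hi (Ordinal hk))) = a (s i).
  apply: (sandwich (j:=j)) => //=; lia.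
by rewrite subrr.
Qed.

Lemma Pv_zero a s (k : 'I_N.-1) : gap a s k = 0 -> Pv a s = 0.
Proof. by move=> gk; rewrite /Pv (bigD1 k) //= gk mul0r mulr0. Qed.

Lemma inj_of_gaps a s : wsort a s -> (forall k : 'I_N.-1, gap a s k != 0) ->
  injective a.
Proof.
move=> ws nz x y axy.
have e : a (s (s^-1 x)%g) = a (s (s^-1 y)%g) by rewrite !permKV.
case: (ltngtP (s^-1 x)%g (s^-1 y)%g) => [lt|lt|eq].
- have [k [_ gk]] := zero_gap ws lt e.
  by have := nz k; rewrite gk eqxx.
- have [k [_ gk]] := zero_gap ws lt (esym e).
  by have := nz k; rewrite gk eqxx.
- by have := congr1 s (val_inj eq); rewrite !permKV.
Qed.

Lemma gap_eq a s t : (forall i, a (s i) = a (t i)) -> forall k, gap a s k = gap a t k.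
Proof.
move=> E k; rewrite /gap.
have -> : (fun m => a (s m)) = (fun m => a (t m)) by apply: funext => m; rewrite E.
by [].
Qed.

Lemma Pv_eq a s t : wsort a s -> wsort a t -> Pv a s = Pv a t.
Proof.
move=> ws wt; have E := wsort_eq ws wt.
case: (pickP (fun k : 'I_N.-1 => gap a s k == 0)) => [k /eqP gk | nz].
  rewrite (Pv_zero gk) (@Pv_zero a t k) //.
  by rewrite -(gap_eq E).
have ia := inj_of_gaps ws (fun k => negbT (nz k)).
suff -> : s = t by [].
by apply/permP => i; apply: ia; rewrite E.
Qed.

Lemma sortlet_eq (alpha : 'rV[R]_(3 * N) -> 'I_N -> R) r t :
  wsort (alpha r) t -> sortlet alpha r = Pv (alpha r) t.
Proof.
move=> wt; rewrite /sortlet; case: pickP => [s /forallP Hs | Hn].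
  rewrite -/(Pv (alpha r) s); apply: Pv_eq => // i j.
  rewrite leq_eqVlt => /orP [/eqP/val_inj -> //|ij].
  by have /forallP /(_ j) := Hs i; rewrite ij /= => /ltW.
move: (Hn t) => /negbT /forallPn [i /forallPn [j]].
rewrite negb_imply => /andP [ij nlt].
have e : alpha r (t i) = alpha r (t j).
  apply/le_anti/andP; split; first exact: wt (ltnW ij).
  by rewrite leNgt.
have [k [_ gk]] := zero_gap wt ij e.
by rewrite (Pv_zero gk).
Qed.

End Comb2.

Section Comb3.
Variables (R : realType) (N : nat).
Implicit Types (a : 'I_N -> R) (s t : 'S_N).

Lemma key_alg a s t (v : 'I_N -> R) (k0 : 'I_N.-1) :
  wsort a s -> wsort a t -> gap a s k0 = 0 ->
  (forall k : 'I_N.-1, k != k0 -> gap a s k != 0) ->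
  (-1) ^+ s * (v (s (hi k0)) - v (s (lo k0))) =
  (-1) ^+ t * (v (t (hi k0)) - v (t (lo k0))).
Proof.
move=> ws wt g0 nz.
set i0 := lo k0; set i1 := hi k0.
have E := wsort_eq ws wt.
have onlyk0 : forall kk : 'I_N.-1, gap a s kk = 0 -> kk = k0.
  move=> kk gk; case: (eqVneq kk k0) => // /nz.
  by rewrite gk eqxx.
have U : forall m k : 'I_N, (m < k)%N -> a (s m) = a (s k) -> m = i0 /\ k = i1.
  move=> m k mk e.
  have [kk [vk gk]] := zero_gap ws mk e.
  have kk0 := onlyk0 _ gk.
  have m0 : m = i0 by apply: val_inj; rewrite /= -vk kk0.
  split=> //; apply: val_inj => /=.
  case: (ltngtP k m.+1) => [|lt|eq]; first by lia.
  - have hl : (m.+1 < N)%N by have := ltn_ord k; lia.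
    pose l := Ordinal hl.
    have el : a (s l) = a (s m) by apply: (sandwich (j:=k)) => //=; lia.
    have lk : (l < k)%N by [].
    have [kk' [vk' gk']] := zero_gap ws lk (etrans el e).
    have : val l = val m by rewrite -vk' -vk (onlyk0 _ gk') kk0.
    rewrite /=; lia.
  - by rewrite eq -vk kk0.
have U2 : forall m k : 'I_N, a (s m) = a (s k) ->
    m = k \/ (m = i0 /\ k = i1) \/ (m = i1 /\ k = i0).
  move=> m k e; case: (ltngtP m k) => [lt|lt|eq].
  - by right; left; apply: U.
  - by right; right; have [-> ->] := U _ _ lt (esym e).
  - by left; apply: val_inj.
have i01 : i0 != i1 by apply/eqP => /(congr1 val) /=; lia.
have Tk : forall k, k != i0 -> k != i1 -> t k = s k.
  move=> k h0 h1; have e : a (s (s^-1 (t k))%g) = a (s k) by rewrite permKV E.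
  case: (U2 _ _ e) => [h|[[_ ek]|[_ ek]]].
  - by have := congr1 s h; rewrite permKV.
  - by rewrite ek eqxx in h1.
  - by rewrite ek eqxx in h0.
have T0 : t i0 = s i0 \/ t i0 = s i1.
  have e : a (s (s^-1 (t i0))%g) = a (s i0) by rewrite permKV E.
  case: (U2 _ _ e) => [h|[[h _]|[h _]]]; have := congr1 s h;
    rewrite permKV => ->; by [left|right].
have T1 : t i1 = s i1 \/ t i1 = s i0.
  have e : a (s (s^-1 (t i1))%g) = a (s i1) by rewrite permKV E.
  case: (U2 _ _ e) => [h|[[h _]|[h _]]]; have := congr1 s h;
    rewrite permKV => ->; by [left|right].
have tinj : t i0 != t i1 by rewrite (inj_eq perm_inj).
case: T0 => h0.
- have h1 : t i1 = s i1.
    case: T1 => // h1; by rewrite h0 h1 eqxx in tinj.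
  suff -> : t = s by [].
  apply/permP => k; case: (eqVneq k i0) => [->//|k0'].
  case: (eqVneq k i1) => [->//|k1'].
  exact: Tk.
- have h1 : t i1 = s i0.
    case: T1 => // h1; by rewrite h0 h1 eqxx in tinj.
  have -> : t = (tperm i0 i1 * s)%g.
    apply/permP => k; rewrite permM.
    case: tpermP => [->|->|k0' k1'] //.
    by apply: Tk; apply/eqP.
  rewrite odd_permM odd_tperm i01 signr_addb expr1 mulN1r.
  rewrite !permM tpermL tpermR.
  by rewrite mulNr -mulrN opprB.
Qed.

End Comb3.

Section Anal.
Variables (R : realType) (V : normedModType R) (e : V).

Definition C1e (f : V -> R) :=
  [/\ continuous f, forall x, derivable f x e & continuous (fun x => derive f x e)].

Lemma C1e_cst (c : R) : C1e (fun _ => c).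
Proof.
split; first exact: cst_continuous.
  by move=> x; exact: (derivable_cst c).
have -> : (fun x => derive (fun _ : V => c) x e) = (fun _ => 0).
  by apply: funext => x; exact: (derive_cst c).
exact: cst_continuous.
Qed.

Lemma C1e_B f g : C1e f -> C1e g -> C1e (fun x => f x - g x).
Proof.
move=> [cf df cdf] [cg dg cdg]; split.
- by move=> x; exact: (continuousB (cf x) (cg x)).
- by move=> x; exact: (derivableB (df x) (dg x)).
- have -> : (fun x => derive (fun y => f y - g y) x e) =
            (fun x => derive f x e - derive g x e).
    by apply: funext => x; exact: (deriveB (df x) (dg x)).
  by move=> x; exact: (continuousB (cdf x) (cdg x)).
Qed.

Lemma C1e_M f g : C1e f -> C1e g -> C1e (fun x => f x * g x).
Proof.
move=> [cf df cdf] [cg dg cdg]; split.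
- by move=> x; exact: (continuousM (cf x) (cg x)).
- by move=> x; exact: (derivableM (df x) (dg x)).
- have -> : (fun x => derive (fun y => f y * g y) x e) =
            (fun x => f x * derive g x e + g x * derive f x e).
    by apply: funext => x; exact: (deriveM (df x) (dg x)).
  move=> x; exact: (continuousD (continuousM (cf x) (cdg x)) (continuousM (cg x) (cdf x))).
Qed.

Lemma C1e_prod (I : Type) (r : seq I) (P : pred I) (F : I -> V -> R) :
  (forall i, C1e (F i)) -> C1e (fun x => \prod_(i <- r | P i) F i x).
Proof.
move=> hF; elim: r => [|a r IH].
  have -> : (fun x => \prod_(i <- [::] | P i) F i x) = (fun _ => 1).
    by apply: funext => x; rewrite big_nil.
  exact: C1e_cst.
case Pa : (P a).
  have -> : (fun x => \prod_(i <- a :: r | P i) F i x) =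
            (fun x => F a x * \prod_(i <- r | P i) F i x).
    by apply: funext => x; rewrite big_cons Pa.
  exact: C1e_M.
have -> : (fun x => \prod_(i <- a :: r | P i) F i x) =
          (fun x => \prod_(i <- r | P i) F i x).
  by apply: funext => x; rewrite big_cons Pa.
exact: IH.
Qed.

Lemma derive_prod_zero (m : nat) (F : 'I_m -> V -> R) (k0 : 'I_m) x :
  (forall i, C1e (F i)) -> F k0 x = 0 ->
  derive (fun y => \prod_(i < m) F i y) x e =
  derive (F k0) x e * \prod_(i < m | i != k0) F i x.
Proof.
move=> hF z.
have -> : (fun y => \prod_(i < m) F i y) =
          (fun y => F k0 y * \prod_(i < m | i != k0) F i y).
  by apply: funext => y; rewrite (bigD1 k0).
have [_ d1 _] := hF k0.
have [_ d2 _] := C1e_prod (index_enum 'I_m) (fun i => i != k0) hF.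
rewrite (deriveM (d1 x) (d2 x)) z /=.
by rewrite scale0r add0r mulrC.
Qed.

End Anal.

Section Main.
Variables (R : realType) (N : nat) (alpha : 'rV[R]_(3 * N) -> 'I_N -> R).
Hypothesis halpha : forall i : 'I_N, smooth (fun r => alpha r i).
Variable j : 'I_(3 * N).
Let e := basis_vec R j.
Let V := 'rV[R]_(3 * N).

Lemma C1e_alpha i : C1e e (fun r => alpha r i).
Proof.
split; first exact: (halpha i [::]).1.
  by move=> x; exact: (halpha i [::]).2 j x.
exact: (halpha i [:: j]).1.
Qed.

Lemma C1e_atnat (t : 'S_N) (k : nat) : C1e e (fun x => at_nat (fun m => alpha x (t m)) k).
Proof.
rewrite /at_nat; case: (insub k) => [u|]; first exact: C1e_alpha.
exact: C1e_cst.
Qed.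

Definition Pf (t : 'S_N) := fun x => Pv (alpha x) t.

Lemma C1e_gap (t : 'S_N) (k : nat) : C1e e (fun x => gap (alpha x) t k).
Proof. exact: C1e_B (C1e_atnat t k.+1) (C1e_atnat t k). Qed.

Lemma C1e_Pf (t : 'S_N) : C1e e (Pf t).
Proof.
apply: (C1e_M (C1e_cst _ _)).
exact: (C1e_prod _ _ (fun i : 'I_N.-1 => C1e_gap t i)).
Qed.


Lemma derive_Pf_zero (s : 'S_N) x (k0 : 'I_N.-1) : gap (alpha x) s k0 = 0 ->
  derive (Pf s) x e = (-1) ^+ s * (derive (fun y => gap (alpha y) s k0) x e *
     \prod_(i < N.-1 | i != k0) gap (alpha x) s i).
Proof.
move=> z.
have [_ dp _] := C1e_prod (index_enum 'I_N.-1) xpredT (fun (i : 'I_N.-1) => C1e_gap s i).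
rewrite /Pf /Pv.
rewrite (deriveMl _ (dp x)).
congr (_ * _).
exact: (derive_prod_zero (F := fun (i : 'I_N.-1) y => gap (alpha y) s i) (fun i => C1e_gap s i) z).
Qed.

Lemma derive_gap (s : 'S_N) x (k : 'I_N.-1) :
  derive (fun y => gap (alpha y) s k) x e =
  derive (fun y => alpha y (s (hi k))) x e - derive (fun y => alpha y (s (lo k))) x e.
Proof.
have -> : (fun y => gap (alpha y) s k) =
          (fun y => alpha y (s (hi k)) - alpha y (s (lo k))).
  by apply: funext => y; rewrite gapE.
have [_ d1 _] := C1e_alpha (s (hi k)).
have [_ d2 _] := C1e_alpha (s (lo k)).
exact: (deriveB (d1 x) (d2 x)).
Qed.

Lemma keyD x (s t : 'S_N) : wsort (alpha x) s -> wsort (alpha x) t ->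
  derive (Pf s) x e = derive (Pf t) x e.
Proof.
move=> ws wt; have E := wsort_eq ws wt.
case: (pickP (fun k : 'I_N.-1 => gap (alpha x) s k == 0)) => [k0 /eqP gk | nz]; last first.
  have ia := inj_of_gaps ws (fun k => negbT (nz k)).
  suff -> : s = t by [].
  by apply/permP => i; apply: ia; rewrite E.
have gkt : gap (alpha x) t k0 = 0 by rewrite -(gap_eq E).
rewrite (derive_Pf_zero gk) (derive_Pf_zero gkt).
have -> : \prod_(i < N.-1 | i != k0) gap (alpha x) t i =
          \prod_(i < N.-1 | i != k0) gap (alpha x) s i.
  by apply: eq_bigr => i _; rewrite (gap_eq E).
case: (pickP (fun k : 'I_N.-1 => (k != k0) && (gap (alpha x) s k == 0))) =>
    [k1 /andP [k10 /eqP gk1] | nz2].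
  by rewrite (bigD1 k1) //= gk1 !mul0r !mulr0.
rewrite !mulrA !derive_gap.
congr (_ * _).
apply: (key_alg (a := alpha x) (fun m => derive (fun y => alpha y m) x e)) => // k kk0.
by have := nz2 k; rewrite kk0 /= => ->.
Qed.


Lemma NB (r0 : 'rV[R]_(3 * N)) :
  \forall x \near r0, forall t : 'S_N, wsort (alpha x) t -> wsort (alpha r0) t.
Proof.
have H : forall p : 'I_N * 'I_N, \forall x \near r0,
    alpha r0 p.1 < alpha r0 p.2 -> alpha x p.1 < alpha x p.2.
  move=> [i k] /=.
  case: (boolP (alpha r0 i < alpha r0 k)) => hlt; last first.
    have FF : Filter (nbhs r0) by typeclasses eauto.
    by apply: (nearW FF) => x /negP.
  have [ci _ _] := C1e_alpha i.
  have [ck _ _] := C1e_alpha k.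
  have cd : {for r0, continuous (fun x => alpha x k - alpha x i)}.
    exact: (continuousB (ck r0) (ci r0)).
  have d0 : 0 < alpha r0 k - alpha r0 i by rewrite subr_gt0.
  apply: filterS ((cvgrPdist_lt _ _).1 cd _ d0) => x /=.
  rewrite ltr_norml => /andP [_ h] _.
  lra.
have FF : Filter (nbhs r0) by typeclasses eauto.
apply: filterS (filter_forall FF H) => x Hx t wt k l kl.
rewrite leNgt; apply/negP => hlt.
have := Hx (t l, t k) hlt => /=.
by rewrite ltNge wt.
Qed.

Lemma TR (r0 : 'rV[R]_(3 * N)) (P : 'rV[R]_(3 * N) -> Prop) :
  (\forall x \near r0, P x) -> \forall h \near ((0 : R)^')%classic, P (h *: e + r0).
Proof.
move=> HP.
have cg : {for 0, continuous (fun h : R => h *: e + r0)}.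
  apply: differentiable_continuous.
  apply/derivable1_diffP.
  have := (derivable1P id r0 e).1 (@derivable_id R _ r0 e).
  by [].
have := (continuous_withinNx _ _).1 cg.
rewrite scale0r add0r => c.
exact: c P HP.
Qed.

Lemma deriv_sortlet (r0 : 'rV[R]_(3 * N)) (t0 : 'S_N) : wsort (alpha r0) t0 ->
  ((fun h : R => h^-1 *: ((sortlet alpha \o shift r0) (h *: e) - sortlet alpha r0))
    @ (0 : R)^' --> derive (Pf t0) r0 e)%classic.
Proof.
move=> wt0; apply/cvgrPdist_lt => eps eps0.
have Q : forall t : 'S_N, \forall h \near ((0 : R)^')%classic, wsort (alpha r0) t ->
   `|derive (Pf t0) r0 e - h^-1 *: ((Pf t \o shift r0) (h *: e) - Pf t r0)| < eps.
  move=> t; case: (pselect (wsort (alpha r0) t)) => wt; last first.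
    have FF : Filter (((0 : R)^')%classic) by typeclasses eauto.
    by apply: (nearW FF).
  rewrite (keyD wt0 wt).
  have [_ dt _] := C1e_Pf t.
  have FF : Filter (((0 : R)^')%classic) by typeclasses eauto.
  apply: (filterS (F := ((0 : R)^')%classic)) ((cvgrPdist_lt _ _).1 (dt r0) _ eps0).
  by move=> h h1 _.
have FF : Filter (((0 : R)^')%classic) by typeclasses eauto.
apply: filterS2 (filter_forall FF Q) (TR (NB r0)) => h Qh NBh.
have [t wt] := wsort_exists (alpha (h *: e + r0)).
have wtr := NBh t wt.
have := Qh t wtr; rewrite /= (sortlet_eq wt) (sortlet_eq wtr).
by [].
Qed.

Lemma derive_sortlet_val x (t : 'S_N) : wsort (alpha x) t ->
  derive (sortlet alpha) x e = derive (Pf t) x e.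
Proof. by move=> wt; apply: cvg_lim (deriv_sortlet wt). Qed.

Lemma derivable_sortlet x : derivable (sortlet alpha) x e.
Proof.
have [t wt] := wsort_exists (alpha x).
by apply/cvg_ex; exists (derive (Pf t) x e); exact: deriv_sortlet.
Qed.

Lemma continuous_derive_sortlet :
  continuous (fun x => derive (sortlet alpha) x e).
Proof.
move=> r0.
have FF : Filter (nbhs r0) by typeclasses eauto.
apply/(@cvgrPdist_lt _ _ _ _ FF) => eps eps0.
have Q : forall t : 'S_N, \forall x \near r0,
   `|derive (Pf t) r0 e - derive (Pf t) x e| < eps.
  move=> t; have [_ _ cdt] := C1e_Pf t.
  exact: ((cvgrPdist_lt _ _).1 (cdt r0) _ eps0).
apply: filterS2 (filter_forall FF Q) (NB r0) => x Qx NBx.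
have [t wt] := wsort_exists (alpha x).
rewrite /= (derive_sortlet_val wt) (derive_sortlet_val (NBx t wt)).
exact: Qx t.
Qed.

End Main.

Theorem mainTheorem2 (R : realType) (N : nat) (hN : (2 <= N)%N)
  (alpha : 'rV[R]_(3 * N) -> 'I_N -> R)
  (halpha : forall i : 'I_N, smooth (fun r => alpha r i)) :
  forall j : 'I_(3 * N),
    (forall r : 'rV[R]_(3 * N), derivable (sortlet alpha) r (basis_vec R j)) /\
    continuous (fun r : 'rV[R]_(3 * N) => derive (sortlet alpha) r (basis_vec R j)).
Proof.
move=> j; split.
  by move=> r; apply: derivable_sortlet.
by apply: continuous_derive_sortlet.
Qed.
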